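(* (a) Every countably tight $L$-selective space is Fr\'echet. (b) Every countable subspace of an $L$-selective space is Fr\'echet. (c) Every strongly $L$-selective space is Fr\'echet.
   Context: All spaces are assumed $T_1$. For spaces $Y$, $X$, a map $\varphi:Y\to\mathcal P(X)\setminus\{\emptyset\}$ is lower semicontinuous (l.s.c.) if $\{y:\varphi(y)\cap U\neq\emptyset\}$ is open in $Y$ for every open $U\subseteq X$; a selection is a map $f:Y\to X$ with $f(y)\in\varphi(y)$ for all $y$. $X$ is strongly $Y$-selective if every l.s.c. map $Y\to\mathcal P(X)\setminus\{\emptyset\}$ has a continuous selection, and $Y$-selective if every l.s.c. map from $Y$ to the nonempty closed subsets of $X$ has a continuous selection. (Strongly) $L$-selective means (strongly) $(\omega+1)$-selective, with $\omega+1$ carrying the order topology. A space is Fr\'echet if whenever $x\in\overline A$ there is a sequence in $A$ converging to $x$; countably tight if whenever $x\in\overline A$ there is a countable $B\subseteq A$ with $x\in\overline B$. *)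

(* Defs.v *)
From HB Require Import structures.
From mathcomp Require Import all_boot all_order all_algebra.
From mathcomp Require Import all_classical topology subtype_topology.

Set Implicit Arguments.
Unset Strict Implicit.
Unset Printing Implicit Defensive.

Import Order.TTheory.
Local Open Scope classical_set_scope.

(** * The ordinal omega+1 = {0 < 1 < 2 < ... < omega}.
    Points are [Some n] (the finite ordinal n) and [None] (omega).
    We order it by transporting the lexicographic order of [bool *l nat]
    along [omega1_enc] (Some n |-> (false, n), None |-> (true, 0)),
    so that Some m < Some n iff m < n, and Some n < None for all n. *)
Definition omega1_base : Type := option nat.

Definition omega1_enc (o : omega1_base) : (bool *l nat)%type :=
  if o is Some n then (false, n) else (true, 0%N).
Definition omega1_dec (p : (bool *l nat)%type) : omega1_base :=
  if p.1 then None else Some p.2.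
Lemma omega1_encK : cancel omega1_enc omega1_dec.
Proof. by case. Qed.

HB.instance Definition _ :=
  Order.POrder.copy omega1_base
    (@can_type omega1_base _ _ _ omega1_encK : porderType (Order.Disp tt tt)).
HB.instance Definition _ :=
  Order.MonoTotal.Build (Order.Disp tt tt) omega1_base
    (f := omega1_enc) (fun _ _ => erefl).

Definition omega1 : Type := order_topology omega1_base.
HB.instance Definition _ := Topological.on omega1.

Definition lsc {Y X : topologicalType} (phi : Y -> set X) : Prop :=
  forall U : set X, open U -> open [set y | phi y `&` U !=set0].

Definition strongly_selective (Y X : topologicalType) : Prop :=
  forall phi : Y -> set X,
    (forall y, phi y !=set0) -> lsc phi ->
    exists f : Y -> X, continuous f /\ (forall y, phi y (f y)).

Definition selective (Y X : topologicalType) : Prop :=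
  forall phi : Y -> set X,
    (forall y, phi y !=set0) -> (forall y, closed (phi y)) -> lsc phi ->
    exists f : Y -> X, continuous f /\ (forall y, phi y (f y)).

Definition L_selective (X : topologicalType) : Prop := selective omega1 X.
Definition strongly_L_selective (X : topologicalType) : Prop :=
  strongly_selective omega1 X.

Definition frechet (X : topologicalType) : Prop :=
  forall (A : set X) (x : X), closure A x ->
    exists u : nat -> X, (forall n, A (u n)) /\ u @ \oo --> x.

Definition countably_tight (X : topologicalType) : Prop :=
  forall (A : set X) (x : X), closure A x ->
    exists B : set X, B `<=` A /\ countable B /\ closure B x.

(* Main.v *)
Require Import Defs.
From HB Require Import structures.
From mathcomp Require Import all_boot all_order all_algebra.
From mathcomp Require Import all_classical topology subtype_topology.
Import Order.TTheory.
Local Open Scope classical_set_scope.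

Lemma cont_seq (X : topologicalType) (f : omega1 -> X) :
  continuous f -> (fun n => f (Some n)) @ \oo --> f None.
Proof.
move=> cf W /(cf None).
rewrite /= nbhs_simpl order_nbhs_itv => -[i [oi Ni] iW].
suff [k hk] : exists k, forall m, (k <= m)%N -> (Some m : omega1) \in i.
  by exists k => // m /= km; apply: iW; exact: hk.
clear iW.
move: oi Ni; case: i => [[[] a|[]] [[] b|[]]] //=; rewrite ?in_itv /=.
all: try case: a => [a|] //.
all: try case: b => [b|] //.
all: move=> _ _.
all: try (exists a.+1 => m am; rewrite in_itv /=).
all: try (exists 0%N => m am; rewrite in_itv /=).
all: try done.
all: by rewrite andbT.


Qed.

Lemma ltSS m n : (Some m < Some n :> omega1)%O = (m < n)%N.
Proof. by rewrite /Order.lt /=. Qed.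

Lemma lsc_seq (X : topologicalType) (x : X) (P : nat -> set X) :
  (forall U, open U -> U x -> exists k, forall n, (k <= n)%N -> P n `&` U !=set0) ->
  lsc (fun o : omega1 => if o is Some n then P n else [set x]).
Proof.
move=> hP U oU; rewrite openE => -[n|] /= PU; rewrite /interior order_nbhs_itv.
- case: n PU => [|n] PU.
  + exists (Interval (BInfty _ true) (BLeft (Some 1%N : omega1))).
      by split => //; rewrite in_itv.
    move=> [[|m]|] //=; rewrite in_itv /= ?ltSS //.
  + exists (Interval (BRight (Some n : omega1)) (BLeft (Some n.+2 : omega1))).
      by split => //; rewrite in_itv /= !ltSS ltnSn leqnn.
    move=> [m|] //=; rewrite in_itv /= ?ltSS // => /andP[h1 h2].
    by have /eqP -> : m == n.+1 by rewrite eqn_leq h1 -ltnS h2.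
- have Ux : U x by case: PU => y [/= -> ].
  have [k hk] := hP U oU Ux.
  exists (Interval (BRight (Some k : omega1)) (BInfty _ false)).
    by split => //; rewrite in_itv.
  move=> [m|] //=; rewrite in_itv /= ?ltSS // andbT => km.
  exact/hk/ltnW.
Qed.

Lemma seq_strong (X : topologicalType) (A : set X) (x : X) :
  strongly_L_selective X -> closure A x ->
  exists u : nat -> X, (forall n, A (u n)) /\ u @ \oo --> x.
Proof.
move=> sX clA.
pose phi := fun o : omega1 => if o is Some n then A else [set x].
have h1 : forall o, phi o !=set0.
  case=> [n|]; last by exists x.
  by have [y [Ay _]] := clA setT filterT; exists y.
have h2 : lsc phi.
  apply: lsc_seq => U oU Ux; exists 0%N => n _.
  by apply: clA; apply: open_nbhs_nbhs.
have [f [cf hf]] := sX phi h1 h2.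
exists (fun n => f (Some n)); split; first by move=> n; exact: (hf (Some n)).
have fx : f None = x := hf None.
by rewrite -fx; exact: cont_seq.
Qed.

Lemma seq_sel (X : topologicalType) (B : set X) (x : X) :
  accessible_space X -> L_selective X -> countable B -> closure B x ->
  exists u : nat -> X, (forall n, B (u n)) /\ u @ \oo --> x.
Proof.
move=> acc sX /pfcard_geP [B0|/surjfunPex [b Bb]] clB.
  by have [y [] ] := clB setT filterT; rewrite B0.
pose P n := b @` `I_n.+1.
have PB n : P n `<=` B by move=> _ [k _ <-]; rewrite Bb; exists k.
pose phi := fun o : omega1 => if o is Some n then P n else [set x].
have h1 : forall o, phi o !=set0.
  case=> [n|]; last by exists x.
  by exists (b 0%N); exists 0%N.
have h2 : forall o, closed (phi o).
  case=> [n|]; last exact: accessible_closed_set1.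
  apply: (proj1 (@accessible_finite_set_closed X) acc).
  exact/finite_image/finite_II.
have h3 : lsc phi.
  apply: lsc_seq => U oU Ux.
  have [y [By Uy]] := clB U (open_nbhs_nbhs (conj oU Ux)).
  move: By; rewrite Bb => -[k _ bky]; exists k => n kn.
  by exists y; split => //; exists k => //=; rewrite ltnS.
have [f [cf hf]] := sX phi h1 h2 h3.
exists (fun n => f (Some n)); split; first by move=> n; exact: (PB n _ (hf (Some n))).
have fx : f None = x := hf None.
by rewrite -fx; exact: cont_seq.
Qed.

Lemma part_b (X : topologicalType) : accessible_space X -> L_selective X ->
  forall A : set X, countable A -> frechet (set_type A).
Proof.
move=> acc sX A /countable_injP [g ginj] S y clS.
pose B := (set_val : set_type A -> X) @` S.
have BA : B `<=` A by move=> _ [s _ <-]; exact: set_valP.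
have cB : countable B.
  apply/countable_injP; exists g => p q /set_mem Bp /set_mem Bq e.
  by apply: ginj => //; apply/mem_set; exact: BA.
have cv : continuous (set_val : set_type A -> X) by exact: initial_continuous.
have clB : closure B (set_val y).
  move=> W /(cv y) Wy; have [s [Ss Ws]] := clS _ Wy.
  by exists (set_val s); split => //; exists s.
have [u [Bu cu]] := @seq_sel _ _ _ acc sX cB clB.
have /choice [s hs] : forall n, exists s : set_type A, S s /\ set_val s = u n.
  by move=> n; have [s Ss e] := Bu n; exists s.
exists s; split; first by move=> n; exact: (hs n).1.
move=> V; rewrite nbhsE => -[O [oO Oy] OV].
case: oO => W oW eO.
have : nbhs (set_val y) W by apply: open_nbhs_nbhs; split => //; rewrite -eO in Oy.
move=> /cu [N _ hN]; exists N => // n /hN /= Wun; apply: OV.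
by rewrite -eO /= (hs n).2.
Qed.

Theorem mainTheorem14 :
  (* (a) *)
  (forall X : topologicalType, accessible_space X ->
     countably_tight X -> L_selective X -> frechet X) /\
  (* (b) *)
  (forall X : topologicalType, accessible_space X -> L_selective X ->
     forall A : set X, countable A -> frechet (set_type A)) /\
  (* (c) *)
  (forall X : topologicalType, accessible_space X ->
     strongly_L_selective X -> frechet X).
Proof.
split; [|split].
- move=> X acc ct sX A x clA.
  have [B [BA [cB clB]]] := ct A x clA.
  have [u [Bu cu]] := @seq_sel _ _ _ acc sX cB clB.
  by exists u; split => // n; exact/BA/Bu.
- exact: part_b.
- move=> X _ sX A x clA; exact: seq_strong.
Qed.
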